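(* Let $q\in(0,1/2]$, $k>0$, $D>0$, and let $(\bar u,\bar z)$ be a weak-detonation profile as described in the context, with $0\le u_+<u_{\mathrm{ig}}<u_-<1$, so that $\bar u$ is non-increasing (Proposition 2.3) and $0\le \bar u\le 1$, $0\le\bar z\le1$. Define \[ L:=\sup_{x\in\mathbb{R}}\varphi'(\bar u(x))\bar z(x),\qquad M:=\sup_{x\in\mathbb{R}}\Big((1+q)\varphi'(\bar u(x))\bar z(x)-\varphi(\bar u(x))\Big), \] and assume $L>0$. Suppose $\lambda\in\mathbb{C}$ with $\operatorname{Re}\lambda\ge0$ is an eigenvalue of the integrated eigenvalue problem \begin{align*} \lambda w-(1-\bar u)w'&=q\bar u\,z+q(D-1)z'+w'',\\ \lambda z+k\big(\varphi(\bar u)-q\varphi'(\bar u)\bar z\big)z&=z'+k\varphi'(\bar u)\bar z\,w'+Dz'', \end{align*} i.e. there is a nontrivial solution $(w,z)\in H^2(\mathbb{R})\times H^2(\mathbb{R})$. Then \[ \operatorname{Re}\lambda+|\operatorname{Im}\lambda|\le\max\Big\{3,\ \frac{1}{4D}+\Big(\frac14+\frac12|D-1|^2\Big)kL+kM\Big\}. \]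
   Context: Setting: the rescaled Majda model $u_t-u_x+(u^2/2)_x=u_{xx}+qk\varphi(u)z$, $z_t-z_x=Dz_{xx}-k\varphi(u)z$, with ignition function $\varphi(u)=0$ for $u\le u_{\mathrm{ig}}$, $\varphi(u)=e^{-E_A/(u-u_{\mathrm{ig}})}$ for $u>u_{\mathrm{ig}}$ ($E_A>0$). A weak-detonation profile is a steady solution $(\bar u,\bar z)(x)$ of this system (speed normalized to $1$) with $(\bar u,\bar z)\to(u_-,0)$ as $x\to-\infty$ and $(\bar u,\bar z)\to(u_+,1)$ as $x\to+\infty$, where $\tfrac12(u_+^2-u_-^2)=u_+-u_-+q$ and $u_\pm<1$. Here $'$ denotes $\mathrm d/\mathrm dx$, and the equations in $(w,z)$ are the linearized eigenvalue equations written in the integrated variable $w$ with $w'=u+qz$ ($u,z$ the perturbations). *)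

(* Defs.v *)
From Stdlib Require Import Reals Lra.
Open Scope R_scope.

Definition phi (EA uig u : R) : R :=
  if Rle_dec u uig then 0 else exp (- EA / (u - uig)).

Definition dphi (EA uig u : R) : R :=
  if Rle_dec u uig then 0 else EA / (u - uig) ^ 2 * exp (- EA / (u - uig)).

Definition derivs2 (f f1 f2 : R -> R) : Prop :=
  forall x, derivable_pt_lim f x (f1 x) /\ derivable_pt_lim f1 x (f2 x).

(* Square integrability over R (improper Riemann integral of f^2 finite);
   used for continuous f, where it coincides with membership in L^2(R). *)
Definition L2R (f : R -> R) : Prop :=
  exists B : R, forall (a b : R)
    (pr : Riemann_integrable (fun x => (f x) ^ 2) a b),
    a <= b -> RiemannInt pr <= B.

Definition H2R (f f1 f2 : R -> R) : Prop :=
  derivs2 f f1 f2 /\ L2R f /\ L2R f1 /\ L2R f2.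

Definition lim_minf (f : R -> R) (l : R) : Prop :=
  forall eps, 0 < eps -> exists N, forall x, x < N -> Rabs (f x - l) < eps.
Definition lim_pinf (f : R -> R) (l : R) : Prop :=
  forall eps, 0 < eps -> exists N, forall x, N < x -> Rabs (f x - l) < eps.

(* Weak-detonation profile (speed normalized to 1): steady solution of
     u_t - u_x + (u^2/2)_x = u_xx + q k phi(u) z,
     z_t - z_x = D z_xx - k phi(u) z,
   i.e. - ub' + ub ub' = ub'' + q k phi(ub) zb,  - zb' = D zb'' - k phi(ub) zb,
   with (ub,zb) -> (um,0) at -oo and (ub,zb) -> (up,1) at +oo,
   Rankine-Hugoniot relation and um, up < 1. *)
Definition weak_detonation_profile (q k D EA uig um up : R)
  (ub ub1 ub2 zb zb1 zb2 : R -> R) : Prop :=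
  derivs2 ub ub1 ub2 /\ derivs2 zb zb1 zb2 /\
  (forall x, - ub1 x + ub x * ub1 x = ub2 x + q * k * phi EA uig (ub x) * zb x) /\
  (forall x, - zb1 x = D * zb2 x - k * phi EA uig (ub x) * zb x) /\
  lim_minf ub um /\ lim_minf zb 0 /\ lim_pinf ub up /\ lim_pinf zb 1 /\
  (up ^ 2 - um ^ 2) / 2 = up - um + q /\ um < 1 /\ up < 1.

(* Main.v *)
Require Import Defs.
From Stdlib Require Import Reals Lra Psatz Classical.
From Coquelicot Require Import Coquelicot.
Open Scope R_scope.

Definition bndint (g : R -> R) : Prop :=
  (forall x, continuous g x) /\ exists B, forall a b, a <= b -> RInt g a b <= B.

Lemma bndint_plus f g : bndint f -> bndint g -> bndint (fun x => f x + g x).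
Proof.
  intros [cf [B1 H1]] [cg [B2 H2]]. split.
  - intro x. apply (continuous_plus f g); auto.
  - exists (B1 + B2). intros a b hab.
    assert (ef : ex_RInt f a b) by (apply (@ex_RInt_continuous R_CompleteNormedModule); intros; auto).
    assert (eg : ex_RInt g a b) by (apply (@ex_RInt_continuous R_CompleteNormedModule); intros; auto).
    pose proof (RInt_plus f g a b ef eg) as E. simpl in E.
    change plus with Rplus in E. rewrite E.
    specialize (H1 a b hab); specialize (H2 a b hab); lra.
Qed.

Lemma small_inf g : bndint g -> forall eps N, 0 < eps ->
  (exists x, N < x /\ g x < eps) /\ (exists y, y < N /\ g y < eps).
Proof.
  intros [cg [B HB]] eps N Heps.
  set (T := (Rabs B + 1) / eps).
  assert (HT : T * eps = Rabs B + 1) by (unfold T; field; lra).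
  assert (HT0 : 0 < T) by (unfold T; apply Rdiv_lt_0_compat; [pose proof (Rabs_pos B)|]; lra).
  assert (key : forall a, (forall x, a < x < a + T -> eps <= g x) -> False).
  { intros a Ha.
    assert (hab : a <= a + T) by lra.
    assert (eg : ex_RInt g a (a+T)) by (apply (@ex_RInt_continuous R_CompleteNormedModule); intros; auto).
    assert (ec : ex_RInt (fun _ => eps) a (a+T)) by apply ex_RInt_const.
    pose proof (RInt_le (fun _ => eps) g a (a+T) hab ec eg Ha) as H.
    rewrite RInt_const in H. change scal with Rmult in H. simpl in H.
    specialize (HB a (a+T) hab).
    pose proof (Rle_abs B). replace (a + T - a) with T in H by ring. lra. }
  split.
  - apply NNPP. intro Hn. apply (key (N+1)). intros x Hx.
    apply Rnot_lt_le. intro Hlt. apply Hn. exists x. split; [lra|exact Hlt].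
  - apply NNPP. intro Hn. apply (key (N-1-T)). intros x Hx.
    apply Rnot_lt_le. intro Hlt. apply Hn. exists x. split; [lra|exact Hlt].
Qed.

Lemma L2R_bndint f f1 : (forall x, derivable_pt_lim f x (f1 x)) -> L2R f ->
  bndint (fun x => f x ^ 2).
Proof.
  intros Hd [B HB].
  assert (cf : forall x, continuous f x).
  { intro x. apply (@ex_derive_continuous R_AbsRing R_NormedModule). exists (f1 x). apply is_derive_Reals. auto. }
  assert (c2 : forall x, continuous (fun x => f x ^ 2) x).
  { intro x. apply (continuous_mult f (fun x => f x ^ 1)); auto.
    apply (continuous_mult f (fun _ => 1)); auto. apply continuous_const. }
  split; auto. exists B. intros a b hab.
  assert (e : ex_RInt (fun x => f x ^ 2) a b) by (apply (@ex_RInt_continuous R_CompleteNormedModule); intros; auto).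
  rewrite (RInt_Reals _ _ _ (ex_RInt_Reals_0 _ _ _ e)). apply HB; auto.
Qed.

Definition Psiv (s D be q ub w1 w1' w2 w2' z1 z1' z2 z2' : R) : R :=
  (z1 ^ 2 + z2 ^ 2) / 2 + D * (z1' * z1 + z2' * z2)
  + s * D * (z2' * z1 - z1' * z2)
  + be * ((1 - ub) * (w1 ^ 2 + w2 ^ 2) / 2
          + q * (D - 1) * (z1 * w1 + z2 * w2 + s * (z2 * w1 - z1 * w2))
          + (w1' * w1 + w2' * w2 + s * (w2' * w1 - w1' * w2))).

Definition Psi (s D be q : R) (ub w1 w1' w2 w2' z1 z1' z2 z2' : R -> R) (t : R) : R :=
  Psiv s D be q (ub t) (w1 t) (w1' t) (w2 t) (w2' t) (z1 t) (z1' t) (z2 t) (z2' t).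

Definition dPsiv (s D be q u u1 w1 w1' w1'' w2 w2' w2'' z1 z1' z1'' z2 z2' z2'' : R) : R :=
  (z1 * z1' + z2 * z2')
  + D * (z1'' * z1 + z1' ^ 2 + z2'' * z2 + z2' ^ 2)
  + s * D * (z2'' * z1 - z1'' * z2)
  + be * (- u1 * (w1 ^ 2 + w2 ^ 2) / 2 + (1 - u) * (w1 * w1' + w2 * w2')
          + q * (D - 1) * (z1' * w1 + z1 * w1' + z2' * w2 + z2 * w2'
                          + s * (z2' * w1 + z2 * w1' - z1' * w2 - z1 * w2'))
          + (w1'' * w1 + w1' ^ 2 + w2'' * w2 + w2' ^ 2
             + s * (w2'' * w1 - w1'' * w2))).

Definition dPsi (s D be q : R) (ub ub1 w1 w1' w1'' w2 w2' w2'' z1 z1' z1'' z2 z2' z2'' : R -> R) (t : R) : R :=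
  dPsiv s D be q (ub t) (ub1 t) (w1 t) (w1' t) (w1'' t) (w2 t) (w2' t) (w2'' t)
    (z1 t) (z1' t) (z1'' t) (z2 t) (z2' t) (z2'' t).

Lemma Psi_deriv s D be q ub ub1 w1 w1' w1'' w2 w2' w2'' z1 z1' z1'' z2 z2' z2'' t :
  derivable_pt_lim ub t (ub1 t) ->
  derivable_pt_lim w1 t (w1' t) -> derivable_pt_lim w1' t (w1'' t) ->
  derivable_pt_lim w2 t (w2' t) -> derivable_pt_lim w2' t (w2'' t) ->
  derivable_pt_lim z1 t (z1' t) -> derivable_pt_lim z1' t (z1'' t) ->
  derivable_pt_lim z2 t (z2' t) -> derivable_pt_lim z2' t (z2'' t) ->
  derivable_pt_lim (Psi s D be q ub w1 w1' w2 w2' z1 z1' z2 z2') t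
    (dPsi s D be q ub ub1 w1 w1' w1'' w2 w2' w2'' z1 z1' z1'' z2 z2' z2'' t).
Proof.
  intros H1 H2 H3 H4 H5 H6 H7 H8 H9.
  apply is_derive_Reals in H1, H2, H3, H4, H5, H6, H7, H8, H9.
  apply is_derive_Reals. unfold Psi, Psiv, dPsi, dPsiv. auto_derive.
  - repeat split; eexists; eassumption.
  - assert (E : forall f l, is_derive f t l -> Derive (fun x => f x) t = l)
      by (intros f l Hf; apply is_derive_unique; exact Hf).
    rewrite (E _ _ H1), (E _ _ H2), (E _ _ H3), (E _ _ H4), (E _ _ H5), (E _ _ H6),
      (E _ _ H7), (E _ _ H8), (E _ _ H9).
    match goal with |- ?A = ?B => change (@eq R A B) end. field.
Qed.


Lemma Iz (a b s D q g h KM be z1 z1' z2 z2' w1' w2' Dz1 Dz2 : R) :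
  s = 1 \/ s = -1 -> 0 < D -> 0 <= g <= be -> (1+q)*g - h <= KM ->
  a*z1 - b*z2 + (h - q*g)*z1 = z1' + g*w1' + Dz1 ->
  a*z2 + b*z1 + (h - q*g)*z2 = z2' + g*w2' + Dz2 ->
  (a + s*b) * (z1^2+z2^2) <=
    (z1 * z1' + z2 * z2') + (Dz1 * z1 + D * z1'^2 + Dz2 * z2 + D * z2'^2)
    + s * (Dz2 * z1 - Dz1 * z2)
    + (1/(4*D) + KM) * (z1^2+z2^2) + 1/2 * be * (w1'^2 + w2'^2).
Proof.
  intros hs hD [hg0 hg1] hM E1 E2.
  assert (S1 : s*(z2'*z1 - z1'*z2) <= D*(z1'^2+z2'^2) + 1/(4*D)*(z1^2+z2^2)).
  { assert (Eq : D*(z1'^2+z2'^2) + 1/(4*D)*(z1^2+z2^2) - s*(z2'*z1 - z1'*z2)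
       = D*(z2' - s*z1/(2*D))^2 + D*(z1' + s*z2/(2*D))^2 + (1 - s^2)/(4*D)*(z1^2+z2^2)).
    { field. lra. }
    assert (s^2 = 1) by (destruct hs; subst; ring).
    assert (0 <= D*(z2' - s*z1/(2*D))^2) by (apply Rmult_le_pos; [lra|apply pow2_ge_0]).
    assert (0 <= D*(z1' + s*z2/(2*D))^2) by (apply Rmult_le_pos; [lra|apply pow2_ge_0]).
    assert (Eq2 : (1 - s^2)/(4*D)*(z1^2+z2^2) = 0) by (rewrite H; field; lra).
    lra. }
  assert (S2 : g*((w1'*z1+w2'*z2) + s*(w2'*z1 - w1'*z2)) <= g*(z1^2+z2^2) + 1/2*g*(w1'^2+w2'^2)).
  { assert (0 <= (z1^2+z2^2) + 1/2*(w1'^2+w2'^2) - ((w1'*z1+w2'*z2) + s*(w2'*z1 - w1'*z2))).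
    { destruct hs as [-> | ->].
      - assert (0 <= (z1 - (w1'+w2')/2)^2 + (z2 - (w2'-w1')/2)^2) by (pose proof (pow2_ge_0 (z1 - (w1'+w2')/2)); pose proof (pow2_ge_0 (z2 - (w2'-w1')/2)); lra).
        replace ((z1 ^ 2 + z2 ^ 2) + 1 / 2 * (w1' ^ 2 + w2' ^ 2) - ((w1' * z1 + w2' * z2) + 1 * (w2' * z1 - w1' * z2))) with ((z1 - (w1'+w2')/2)^2 + (z2 - (w2'-w1')/2)^2) by field. exact H.
      - assert (0 <= (z1 - (w1'-w2')/2)^2 + (z2 - (w2'+w1')/2)^2) by (pose proof (pow2_ge_0 (z1 - (w1'-w2')/2)); pose proof (pow2_ge_0 (z2 - (w2'+w1')/2)); lra).
        replace ((z1 ^ 2 + z2 ^ 2) + 1 / 2 * (w1' ^ 2 + w2' ^ 2) - ((w1' * z1 + w2' * z2) + -1 * (w2' * z1 - w1' * z2))) with ((z1 - (w1'-w2')/2)^2 + (z2 - (w2'+w1')/2)^2) by field. exact H. }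
    nra. }
  assert (S3 : ((1+q)*g - h)*(z1^2+z2^2) <= KM*(z1^2+z2^2)).
  { apply Rmult_le_compat_r; [nra|lra]. }
  assert (S4 : g*(w1'^2+w2'^2) <= be*(w1'^2+w2'^2)) by (apply Rmult_le_compat_r; nra).
  assert (P1 : s*(Dz2*z1 - Dz1*z2) = s*((a*z2 + b*z1 + (h - q*g)*z2 - z2' - g*w2')*z1
                 - (a*z1 - b*z2 + (h - q*g)*z1 - z1' - g*w1')*z2)).
  { f_equal. replace Dz1 with (a*z1 - b*z2 + (h - q*g)*z1 - z1' - g*w1') by lra.
    replace Dz2 with (a*z2 + b*z1 + (h - q*g)*z2 - z2' - g*w2') by lra. ring. }
  assert (P2 : Dz1*z1 + Dz2*z2 = (a*z1 - b*z2 + (h - q*g)*z1 - z1' - g*w1')*z1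
                 + (a*z2 + b*z1 + (h - q*g)*z2 - z2' - g*w2')*z2).
  { replace Dz1 with (a*z1 - b*z2 + (h - q*g)*z1 - z1' - g*w1') by lra.
    replace Dz2 with (a*z2 + b*z1 + (h - q*g)*z2 - z2' - g*w2') by lra. ring. }
  destruct hs; subst s; lra.
Qed.

Lemma sosAB (x1 x2 A B c : R) :
  c*(x1*A + x2*B) <= (A^2+B^2)/8 + 2*c^2*(x1^2+x2^2).
Proof.
  pose proof (pow2_ge_0 (A - 4*c*x1)). pose proof (pow2_ge_0 (B - 4*c*x2)).
  assert (E : (A^2+B^2)/8 + 2*c^2*(x1^2+x2^2) - c*(x1*A + x2*B)
      = (A - 4*c*x1)^2/8 + (B - 4*c*x2)^2/8) by field.
  lra.
Qed.

Lemma sos2 (x1 x2 y1 y2 c s : R) : s = 1 \/ s = -1 ->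
  c * ((x1*y1 + x2*y2) + s*(x2*y1 - x1*y2)) <= 1/4*(y1^2+y2^2) + 2*c^2*(x1^2+x2^2).
Proof.
  intros [-> | ->].
  - pose proof (sosAB x1 x2 (y1-y2) (y1+y2) c).
    replace ((x1*y1 + x2*y2) + 1*(x2*y1 - x1*y2)) with (x1*(y1-y2) + x2*(y1+y2)) by ring.
    replace (1/4*(y1^2+y2^2)) with (((y1-y2)^2+(y1+y2)^2)/8) by field. exact H.
  - pose proof (sosAB x1 x2 (y1+y2) (y2-y1) c).
    replace ((x1*y1 + x2*y2) + -1*(x2*y1 - x1*y2)) with (x1*(y1+y2) + x2*(y2-y1)) by ring.
    replace (1/4*(y1^2+y2^2)) with (((y1+y2)^2+(y2-y1)^2)/8) by field. exact H.
Qed.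

Lemma Iw (a b s D q u u1 w1 w1' w1'' w2 w2' w2'' z1 z1' z2 z2' : R) :
  s = 1 \/ s = -1 -> 0 < q <= 1/2 -> 0 <= u <= 1 -> u1 <= 0 ->
  a*w1 - b*w2 - (1-u)*w1' = q*u*z1 + q*(D-1)*z1' + w1'' ->
  a*w2 + b*w1 - (1-u)*w2' = q*u*z2 + q*(D-1)*z2' + w2'' ->
  (a + s*b) * (w1^2+w2^2) + 1/2*(w1'^2+w2'^2) <=
    (- u1 * (w1^2 + w2^2) / 2 + (1 - u) * (w1 * w1' + w2 * w2')
          + q * (D - 1) * (z1' * w1 + z1 * w1' + z2' * w2 + z2 * w2'
                          + s * (z2' * w1 + z2 * w1' - z1' * w2 - z1 * w2'))
          + (w1'' * w1 + w1'^2 + w2'' * w2 + w2'^2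
             + s * (w2'' * w1 - w1'' * w2)))
    + 3/2 * (w1^2+w2^2) + (1/4 + 1/2*(D-1)^2) * (z1^2+z2^2).
Proof.
  intros hs hq hu hu1 E1 E2.
  assert (T1 : s*(1-u)*(w2'*w1 - w1'*w2) <= 1/4*(w1'^2+w2'^2) + (w1^2+w2^2)).
  { set (c := 1-u).
    assert (c^2 <= 1) by (unfold c; nra).
    assert (c^2*(w1^2+w2^2) <= w1^2+w2^2) by (pose proof (pow2_ge_0 w1); pose proof (pow2_ge_0 w2); nra).
    pose proof (pow2_ge_0 (w2'/2 - s*c*w1)). pose proof (pow2_ge_0 (w1'/2 + s*c*w2)).
    assert (E : (w2'/2 - s*c*w1)^2 + (w1'/2 + s*c*w2)^2
       = 1/4*(w1'^2+w2'^2) + s^2*c^2*(w1^2+w2^2) - s*c*(w2'*w1 - w1'*w2)) by field.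
    assert (s^2 = 1) by (destruct hs as [-> | ->]; ring).
    rewrite H3 in E. lra. }
  assert (T2 : q*u*((z1*w1+z2*w2) + s*(z2*w1 - z1*w2)) <= 1/4*(z1^2+z2^2) + 1/2*(w1^2+w2^2)).
  { assert (hs' : -s = 1 \/ -s = -1) by (destruct hs; [right|left]; lra).
    pose proof (sos2 w1 w2 z1 z2 (1/2) (-s) hs') as H.
    assert (H' : (z1*w1+z2*w2) + s*(z2*w1 - z1*w2) <= 1/2*(z1^2+z2^2) + (w1^2+w2^2)).
    { lra. }
    assert (0 <= q*u <= 1/2) by nra.
    assert (0 <= 1/2*(z1^2+z2^2) + (w1^2+w2^2)) by nra.
    nra. }
  assert (T3 : - q*(D-1)*((z1*w1'+z2*w2') + s*(z2*w1' - z1*w2')) <= 1/4*(w1'^2+w2'^2) + 1/2*(D-1)^2*(z1^2+z2^2)).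
  { pose proof (sos2 z1 z2 w1' w2' (-(q*(D-1))) s hs) as H.
    assert (2*(-(q*(D-1)))^2 <= 1/2*(D-1)^2).
    { replace (2*(-(q*(D-1)))^2) with (2*q^2*(D-1)^2) by ring.
      assert (q^2 <= 1/4) by nra. pose proof (pow2_ge_0 (D-1)). nra. }
    assert (2*(-(q*(D-1)))^2*(z1^2+z2^2) <= 1/2*(D-1)^2*(z1^2+z2^2)).
    { apply Rmult_le_compat_r; [nra|lra]. }
    lra. }
  assert (hw1 : w1'' = a*w1 - b*w2 - (1-u)*w1' - q*u*z1 - q*(D-1)*z1') by lra.
  assert (hw2 : w2'' = a*w2 + b*w1 - (1-u)*w2' - q*u*z2 - q*(D-1)*z2') by lra.
  assert (Hu1 : 0 <= - u1 * (w1^2+w2^2)) by nra.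
  rewrite hw1, hw2.
  destruct hs as [-> | ->]; lra.
Qed.

Lemma pointwise a b s D q be g h KM Y u u1 w1 w1' w1'' w2 w2' w2'' z1 z1' z1'' z2 z2' z2'' :
  s = 1 \/ s = -1 -> 0 < D -> 0 < q <= 1/2 -> 0 <= u <= 1 -> u1 <= 0 ->
  0 <= g <= be -> (1+q)*g - h <= KM -> 0 < be -> 3 <= Y ->
  1/(4*D) + (1/4 + 1/2*(D-1)^2)*be + KM <= Y ->
  a*w1 - b*w2 - (1-u)*w1' = q*u*z1 + q*(D-1)*z1' + w1'' ->
  a*w2 + b*w1 - (1-u)*w2' = q*u*z2 + q*(D-1)*z2' + w2'' ->
  a*z1 - b*z2 + (h - q*g)*z1 = z1' + g*w1' + D*z1'' ->
  a*z2 + b*z1 + (h - q*g)*z2 = z2' + g*w2' + D*z2'' ->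
  (a + s*b - Y) * (z1^2+z2^2 + be*(w1^2+w2^2))
    <= dPsiv s D be q u u1 w1 w1' w1'' w2 w2' w2'' z1 z1' z1'' z2 z2' z2''.
Proof.
  intros hs hD hq hu hu1 hg hM hbe hY3 hYX E1 E2 E3 E4.
  pose proof (Iz a b s D q g h KM be z1 z1' z2 z2' w1' w2' (D*z1'') (D*z2'') hs hD hg hM E3 E4) as HZ.
  pose proof (Iw a b s D q u u1 w1 w1' w1'' w2 w2' w2'' z1 z1' z2 z2' hs hq hu hu1 E1 E2) as HW.
  set (Wb := - u1 * (w1 ^ 2 + w2 ^ 2) / 2 + (1 - u) * (w1 * w1' + w2 * w2')
          + q * (D - 1) * (z1' * w1 + z1 * w1' + z2' * w2 + z2 * w2'
                          + s * (z2' * w1 + z2 * w1' - z1' * w2 - z1 * w2'))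
          + (w1'' * w1 + w1' ^ 2 + w2'' * w2 + w2' ^ 2
             + s * (w2'' * w1 - w1'' * w2))) in HW.
  assert (dE : dPsiv s D be q u u1 w1 w1' w1'' w2 w2' w2'' z1 z1' z1'' z2 z2' z2''
     = (z1 * z1' + z2 * z2') + (D*z1'' * z1 + D * z1'^2 + D*z2'' * z2 + D * z2'^2)
       + s * (D*z2'' * z1 - D*z1'' * z2) + be * Wb) by (unfold dPsiv, Wb; ring).
  rewrite dE.
  set (Z := z1^2+z2^2) in *. set (W := w1^2+w2^2) in *. set (W' := w1'^2+w2'^2) in *.
  assert (hZ : 0 <= Z) by (unfold Z; nra). assert (hW : 0 <= W) by (unfold W; nra).
  assert (hW' : 0 <= W') by (unfold W'; nra).
  assert (HW2 : be * ((a + s*b) * W + 1/2 * W') <= be * (Wb + 3/2 * W + (1/4 + 1/2*(D-1)^2) * Z))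
    by (apply Rmult_le_compat_l; lra).
  assert (F1 : (1/(4*D) + KM + (1/4 + 1/2*(D-1)^2)*be) * Z <= Y * Z)
    by (apply Rmult_le_compat_r; lra).
  assert (F2 : 3/2 * (be * W) <= Y * (be * W)) by (apply Rmult_le_compat_r; nra).
  nra.
Qed.

Lemma deriv_nonincr f x l : derivable_pt_lim f x l ->
  (forall x y, x <= y -> f y <= f x) -> l <= 0.
Proof.
  intros Hd Hm. apply Rnot_lt_le. intro hl.
  destruct (Hd l hl) as [del Hdel].
  assert (h0 : del / 2 <> 0) by (pose proof (cond_pos del); lra).
  assert (h1 : Rabs (del/2) < del) by (rewrite Rabs_pos_eq; pose proof (cond_pos del); lra).
  specialize (Hdel (del/2) h0 h1).
  assert (Hf : f (x + del/2) <= f x) by (apply Hm; pose proof (cond_pos del); lra).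
  assert (Hq : (f (x + del/2) - f x) / (del/2) <= 0).
  { unfold Rdiv. apply Rmult_le_0_r. lra. apply Rlt_le, Rinv_0_lt_compat. pose proof (cond_pos del); lra. }
  apply Rabs_def2 in Hdel. lra.
Qed.

Lemma deriv_pos_step f x l : derivable_pt_lim f x l -> 0 < l ->
  exists h, 0 < h /\ f x < f (x + h).
Proof.
  intros Hd hl.
  destruct (Hd l hl) as [del Hdel].
  assert (h0 : del / 2 <> 0) by (pose proof (cond_pos del); lra).
  assert (h1 : Rabs (del/2) < del) by (rewrite Rabs_pos_eq; pose proof (cond_pos del); lra).
  specialize (Hdel (del/2) h0 h1).
  exists (del/2). split. pose proof (cond_pos del); lra.
  apply Rabs_def2 in Hdel.
  apply Rnot_le_lt. intro Hf.
  assert ((f (x + del/2) - f x) / (del/2) <= 0).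
  { unfold Rdiv. apply Rmult_le_0_r. lra. apply Rlt_le, Rinv_0_lt_compat. pose proof (cond_pos del); lra. }
  lra.
Qed.

Lemma dphi_nonneg EA uig u : 0 < EA -> 0 <= dphi EA uig u.
Proof.
  intro hE. unfold dphi. destruct (Rle_dec u uig). lra.
  apply Rmult_le_pos; [apply Rlt_le, Rdiv_lt_0_compat; [lra| apply pow_lt; lra] | apply Rlt_le, exp_pos].
Qed.

Lemma abs_pair x1 y1 x2 y2 S : x1^2 + y1^2 + x2^2 + y2^2 <= S ->
  -S <= x1*y1 + x2*y2 <= S /\ -S <= x1*y1 - x2*y2 <= S.
Proof.
  intro H. pose proof (pow2_ge_0 (x1-y1)). pose proof (pow2_ge_0 (x1+y1)).
  pose proof (pow2_ge_0 (x2-y2)). pose proof (pow2_ge_0 (x2+y2)). nra.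
Qed.

Lemma cmul_bnd c P S : -S <= P <= S -> - (Rabs c * S) <= c * P <= Rabs c * S.
Proof.
  intros [H1 H2]. destruct (Rle_dec 0 c).
  - rewrite Rabs_pos_eq by lra. split; nra.
  - rewrite Rabs_left by lra. split; nra.
Qed.

Lemma Psiv_bnd s D be q u w1 w1' w2 w2' z1 z1' z2 z2' :
  s = 1 \/ s = -1 -> 0 <= u <= 1 ->
  let S := w1^2 + w1'^2 + w2^2 + w2'^2 + z1^2 + z1'^2 + z2^2 + z2'^2 in
  let C := 1/2 + 2 * Rabs D + Rabs be * (1/2 + 2 * Rabs (q*(D-1)) + 2) in
  - (C * S) <= Psiv s D be q u w1 w1' w2 w2' z1 z1' z2 z2' <= C * S.
Proof.
  intros hs hu S C.
  assert (sq : forall x, 0 <= x^2) by (intro; apply pow2_ge_0).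
  pose proof (sq w1). pose proof (sq w1'). pose proof (sq w2). pose proof (sq w2').
  pose proof (sq z1). pose proof (sq z1'). pose proof (sq z2). pose proof (sq z2').
  assert (P1 := proj1 (abs_pair z1' z1 z2' z2 S ltac:(unfold S; lra))).
  assert (P2 := proj2 (abs_pair z2' z1 z1' z2 S ltac:(unfold S; lra))).
  assert (P3 := proj1 (abs_pair z1 w1 z2 w2 S ltac:(unfold S; lra))).
  assert (P4 := proj2 (abs_pair z2 w1 z1 w2 S ltac:(unfold S; lra))).
  assert (P5 := proj1 (abs_pair w1' w1 w2' w2 S ltac:(unfold S; lra))).
  assert (P6 := proj2 (abs_pair w2' w1 w1' w2 S ltac:(unfold S; lra))).
  assert (Q4 : 0 <= (1 - u) * (w1 ^ 2 + w2 ^ 2) / 2 <= S / 2).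
  { split. apply Rmult_le_pos; [|lra]. apply Rmult_le_pos; lra.
    assert ((1-u)*(w1^2+w2^2) <= w1^2+w2^2) by nra. unfold S; lra. }
  assert (P34 : -(2*S) <= z1 * w1 + z2 * w2 + s * (z2 * w1 - z1 * w2) <= 2*S)
    by (destruct hs as [-> | ->]; lra).
  assert (P56 : -(2*S) <= w1' * w1 + w2' * w2 + s * (w2' * w1 - w1' * w2) <= 2*S)
    by (destruct hs as [-> | ->]; lra).
  pose proof (cmul_bnd (q*(D-1)) _ _ P34) as B34.
  assert (I : -((1/2 + 2 * Rabs (q*(D-1)) + 2) * S) <=
     (1 - u) * (w1 ^ 2 + w2 ^ 2) / 2 + q * (D - 1) * (z1 * w1 + z2 * w2 + s * (z2 * w1 - z1 * w2))
     + (w1' * w1 + w2' * w2 + s * (w2' * w1 - w1' * w2)) <= (1/2 + 2 * Rabs (q*(D-1)) + 2) * S).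
  { lra. }
  pose proof (cmul_bnd be _ _ I) as BI.
  pose proof (cmul_bnd D _ _ P1) as B1.
  pose proof (cmul_bnd (s*D) _ _ P2) as B2.
  assert (Rabs (s*D) = Rabs D) by (rewrite Rabs_mult; destruct hs as [-> | ->];
     [rewrite Rabs_R1; ring | rewrite (Rabs_left (-1)) by lra; ring]).
  rewrite H7 in B2.
  assert (T1 : 0 <= (z1 ^ 2 + z2 ^ 2) / 2 <= S/2) by (unfold S; lra).
  assert (S0 : 0 <= S) by (unfold S; lra).
  unfold Psiv, C. clearbody S. lra.
Qed.

Theorem proposition3p1
  (q k D EA uig um up : R)
  (ub ub1 ub2 zb zb1 zb2 : R -> R)
  (L M a b : R)
  (w1 w1' w1'' w2 w2' w2'' z1 z1' z1'' z2 z2' z2'' : R -> R) :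
  0 < q -> q <= 1 / 2 -> 0 < k -> 0 < D -> 0 < EA ->
  0 <= up -> up < uig -> uig < um -> um < 1 ->
  weak_detonation_profile q k D EA uig um up ub ub1 ub2 zb zb1 zb2 ->
  (* consequences of Proposition 2.3 recalled in the statement *)
  (forall x y, x <= y -> ub y <= ub x) ->
  (forall x, 0 <= ub x <= 1) -> (forall x, 0 <= zb x <= 1) ->
  is_lub (fun y => exists x, y = dphi EA uig (ub x) * zb x) L ->
  is_lub (fun y => exists x, y = (1 + q) * dphi EA uig (ub x) * zb x
                                   - phi EA uig (ub x)) M ->
  0 < L ->
  0 <= a ->
  H2R w1 w1' w1'' -> H2R w2 w2' w2'' -> H2R z1 z1' z1'' -> H2R z2 z2' z2'' ->
  (exists x, w1 x <> 0 \/ w2 x <> 0 \/ z1 x <> 0 \/ z2 x <> 0) ->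
  (forall x,
     a * w1 x - b * w2 x - (1 - ub x) * w1' x
       = q * ub x * z1 x + q * (D - 1) * z1' x + w1'' x) ->
  (forall x,
     a * w2 x + b * w1 x - (1 - ub x) * w2' x
       = q * ub x * z2 x + q * (D - 1) * z2' x + w2'' x) ->
  (forall x,
     a * z1 x - b * z2 x
       + k * (phi EA uig (ub x) - q * dphi EA uig (ub x) * zb x) * z1 x
       = z1' x + k * dphi EA uig (ub x) * zb x * w1' x + D * z1'' x) ->
  (forall x,
     a * z2 x + b * z1 x
       + k * (phi EA uig (ub x) - q * dphi EA uig (ub x) * zb x) * z2 x
       = z2' x + k * dphi EA uig (ub x) * zb x * w2' x + D * z2'' x) ->
  a + Rabs b <=
    Rmax 3 (1 / (4 * D) + (1 / 4 + 1 / 2 * (Rabs (D - 1)) ^ 2) * k * L + k * M).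
Proof.
  intros hq0 hq1 hk hD hEA hup1 hup2 hig hum Hprof Hmono Hub Hzb HL HM HL0 ha
    Hw1 Hw2 Hz1 Hz2 Hnt E1 E2 E3 E4.
  destruct Hprof as [Hubd _].
  set (X := 1 / (4 * D) + (1 / 4 + 1 / 2 * (Rabs (D - 1)) ^ 2) * k * L + k * M).
  set (Y := Rmax 3 X).
  apply Rnot_lt_le; intro Hlt.
  set (del := a + Rabs b - Y).
  assert (hdel : 0 < del) by (unfold del; lra).
  assert (Hs : exists s, (s = 1 \/ s = -1) /\ s * b = Rabs b).
  { destruct (Rle_dec 0 b).
    - exists 1. split; [left; reflexivity|]. rewrite Rabs_pos_eq; lra.
    - exists (-1). split; [right; reflexivity|]. rewrite Rabs_left; lra. }
  destruct Hs as [s [hs hsb]].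
  set (be := k * L).
  assert (hbe : 0 < be) by (unfold be; nra).
  destruct Hw1 as [Dw1 [Lw1 [Lw1' _]]]. destruct Hw2 as [Dw2 [Lw2 [Lw2' _]]].
  destruct Hz1 as [Dz1 [Lz1 [Lz1' _]]]. destruct Hz2 as [Dz2 [Lz2 [Lz2' _]]].
  set (Ps := Psi s D be q ub w1 w1' w2 w2' z1 z1' z2 z2').
  set (dP := dPsi s D be q ub ub1 w1 w1' w1'' w2 w2' w2'' z1 z1' z1'' z2 z2' z2'').
  assert (Hder : forall t, derivable_pt_lim Ps t (dP t)).
  { intro t. apply Psi_deriv.
    - exact (proj1 (Hubd t)).
    - exact (proj1 (Dw1 t)). - exact (proj2 (Dw1 t)).
    - exact (proj1 (Dw2 t)). - exact (proj2 (Dw2 t)).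
    - exact (proj1 (Dz1 t)). - exact (proj2 (Dz1 t)).
    - exact (proj1 (Dz2 t)). - exact (proj2 (Dz2 t)). }
  set (En := fun t => z1 t ^ 2 + z2 t ^ 2 + be * (w1 t ^ 2 + w2 t ^ 2)).
  assert (HEn : forall t, 0 <= En t).
  { intro t. unfold En. pose proof (pow2_ge_0 (z1 t)). pose proof (pow2_ge_0 (z2 t)).
    pose proof (pow2_ge_0 (w1 t)). pose proof (pow2_ge_0 (w2 t)). nra. }
  assert (Hpw : forall t, del * En t <= dP t).
  { intro t. unfold dP, dPsi, En.
    replace del with (a + s * b - Y) by (unfold del; lra).
    pose proof (dphi_nonneg EA uig (ub t) hEA) as hdp.
    pose proof (Hzb t) as hzt. pose proof (Hub t) as hut.
    assert (hgL : dphi EA uig (ub t) * zb t <= L) by (apply (proj1 HL); exists t; reflexivity).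
    assert (hgM : (1 + q) * dphi EA uig (ub t) * zb t - phi EA uig (ub t) <= M)
      by (apply (proj1 HM); exists t; reflexivity).
    apply (pointwise a b s D q be (k * dphi EA uig (ub t) * zb t) (k * phi EA uig (ub t)) (k * M) Y).
    - exact hs.
    - exact hD.
    - lra.
    - exact hut.
    - apply (deriv_nonincr ub t); [exact (proj1 (Hubd t)) | exact Hmono].
    - split. apply Rmult_le_pos; [apply Rmult_le_pos|]; lra.
      unfold be. rewrite Rmult_assoc. apply Rmult_le_compat_l; lra.
    - replace ((1 + q) * (k * dphi EA uig (ub t) * zb t) - k * phi EA uig (ub t))
        with (k * ((1 + q) * dphi EA uig (ub t) * zb t - phi EA uig (ub t))) by ring.
      apply Rmult_le_compat_l; lra.
    - exact hbe.
    - apply Rmax_l.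
    - replace ((D - 1) ^ 2) with (Rabs (D - 1) ^ 2) by apply pow2_abs.
      replace (1 / (4 * D) + (1 / 4 + 1 / 2 * Rabs (D - 1) ^ 2) * be + k * M) with X
        by (unfold X, be; ring).
      apply Rmax_r.
    - exact (E1 t).
    - exact (E2 t).
    - pose proof (E3 t). lra.
    - pose proof (E4 t). lra. }
  assert (Hmon : forall x y, x < y -> Ps x <= Ps y).
  { intros x y hxy. destruct (MVT_cor2 Ps dP x y hxy (fun c _ => Hder c)) as [c [Hc _]].
    pose proof (Hpw c). pose proof (HEn c).
    assert (0 <= dP c) by nra. nra. }
  destruct Hnt as [t0 Ht0].
  assert (hE0 : 0 < En t0).
  { unfold En. pose proof (pow2_ge_0 (z1 t0)). pose proof (pow2_ge_0 (z2 t0)).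
    pose proof (pow2_ge_0 (w1 t0)). pose proof (pow2_ge_0 (w2 t0)).
    assert (0 < z1 t0 ^ 2 + z2 t0 ^ 2 + (w1 t0 ^ 2 + w2 t0 ^ 2)).
    { destruct Ht0 as [Hq | [Hq | [Hq | Hq]]];
        [pose proof (pow2_gt_0 _ Hq) as Hp; lra | pose proof (pow2_gt_0 _ Hq) as Hp; lra
        | pose proof (pow2_gt_0 _ Hq) as Hp; lra | pose proof (pow2_gt_0 _ Hq) as Hp; lra]. }
    destruct (Rle_dec (z1 t0 ^ 2 + z2 t0 ^ 2) 0).
    - assert (0 < w1 t0 ^ 2 + w2 t0 ^ 2) by lra. nra.
    - nra. }
  assert (hd0 : 0 < dP t0) by (pose proof (Hpw t0); nra).
  destruct (deriv_pos_step Ps t0 (dP t0) (Hder t0) hd0) as [h [hh Hstep]].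
  set (eta := Ps (t0 + h) - Ps t0).
  set (S := fun t => w1 t ^ 2 + w1' t ^ 2 + w2 t ^ 2 + w2' t ^ 2 + z1 t ^ 2 + z1' t ^ 2
                     + z2 t ^ 2 + z2' t ^ 2).
  assert (HS : bndint S).
  { unfold S. repeat apply bndint_plus.
    - exact (L2R_bndint w1 w1' (fun x => proj1 (Dw1 x)) Lw1).
    - exact (L2R_bndint w1' w1'' (fun x => proj2 (Dw1 x)) Lw1').
    - exact (L2R_bndint w2 w2' (fun x => proj1 (Dw2 x)) Lw2).
    - exact (L2R_bndint w2' w2'' (fun x => proj2 (Dw2 x)) Lw2').
    - exact (L2R_bndint z1 z1' (fun x => proj1 (Dz1 x)) Lz1).
    - exact (L2R_bndint z1' z1'' (fun x => proj2 (Dz1 x)) Lz1').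
    - exact (L2R_bndint z2 z2' (fun x => proj1 (Dz2 x)) Lz2).
    - exact (L2R_bndint z2' z2'' (fun x => proj2 (Dz2 x)) Lz2'). }
  set (C := 1/2 + 2 * Rabs D + Rabs be * (1/2 + 2 * Rabs (q*(D-1)) + 2)).
  assert (hC : 0 < C).
  { unfold C. pose proof (Rabs_pos D). pose proof (Rabs_pos be). pose proof (Rabs_pos (q*(D-1))). nra. }
  assert (Hb : forall t, - (C * S t) <= Ps t <= C * S t).
  { intro t. exact (Psiv_bnd s D be q (ub t) (w1 t) (w1' t) (w2 t) (w2' t) (z1 t) (z1' t)
       (z2 t) (z2' t) hs (Hub t)). }
  assert (heta : 0 < eta) by (unfold eta; lra).
  set (eps := eta / (3 * C)).
  assert (heps : 0 < eps) by (unfold eps; apply Rdiv_lt_0_compat; lra).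
  assert (hCe : C * eps = eta / 3) by (unfold eps; field; lra).
  destruct (small_inf S HS eps (t0 + h) heps) as [[x [hx Sx]] _].
  destruct (small_inf S HS eps t0 heps) as [_ [y [hy Sy]]].
  pose proof (Hmon _ _ hx). pose proof (Hmon _ _ hy).
  pose proof (Hb x). pose proof (Hb y).
  assert (C * S x < C * eps) by (apply Rmult_lt_compat_l; lra).
  assert (C * S y < C * eps) by (apply Rmult_lt_compat_l; lra).
  unfold eta in *. lra.
Qed.
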